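(* Let $\lambda,\mu\in P^+$ and let $X\subseteq\mathcal{B}(\lambda)$, $Y\subseteq\mathcal{B}(\mu)$ be subsets. If $X\otimes Y$ is an extremal subset of $\mathcal{B}(\lambda)\otimes\mathcal{B}(\mu)$, then $e_i(X)\subseteq X\sqcup\{0\}$ for all $i\in I$. Furthermore, if in addition $e_i(Y)\subseteq Y\sqcup\{0\}$ for all $i\in I$, then $X$ is an extremal subset of $\mathcal{B}(\lambda)$.
   Context: $\mathfrak g$ is a complex semisimple Lie algebra with Dynkin index set $I$ and dominant weights $P^+$. For $\lambda\in P^+$, $\mathcal{B}(\lambda)$ is Kashiwara's crystal of the irreducible module of highest weight $\lambda$, with operators $e_i,f_i:\mathcal{B}(\lambda)\to\mathcal{B}(\lambda)\sqcup\{0\}$, $\varepsilon_i(b)=\max\{k:e_i^k(b)\ne0\}$, $\varphi_i(b)=\max\{k:f_i^k(b)\ne0\}$. The tensor product crystal $\mathcal{B}(\lambda)\otimes\mathcal{B}(\mu)$ has $e_i(b_1\otimes b_2)=e_i(b_1)\otimes b_2$ if $\varepsilon_i(b_2)\le\varphi_i(b_1)$, else $b_1\otimes e_i(b_2)$; $f_i(b_1\otimes b_2)=f_i(b_1)\otimes b_2$ if $\varepsilon_i(b_2)<\varphi_i(b_1)$, else $b_1\otimes f_i(b_2)$. An $i$-string is a connected component of the graph with edges $b\to f_i(b)$. A subset $X$ of a crystal $\mathcal{B}$ is extremal if $X$ is nonempty and for every $i\in I$ and every $i$-string $S$ of $\mathcal{B}$, $S\cap X$ is $\varnothing$, $S$,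 or $\{b\}$ with $b\in S$, $e_i(b)=0$. *)

(* Defs.v *)
From mathcomp Require Import all_boot.
Set Implicit Arguments. Unset Strict Implicit. Unset Printing Implicit Defensive.

Section Crystals.
Variables (I : Type) (B : finType).

(* The value [None] plays the role of the element 0. *)
Fixpoint opt_iter (g : B -> option B) (n : nat) (b : B) : option B :=
  match n with
  | 0 => Some b
  | n'.+1 => obind g (opt_iter g n' b)
  end.

(* max { k : g^k b <> 0 }  (crystal strings in a finite crystal have length < #|B|) *)
Definition str_len (g : B -> option B) (b : B) : nat :=
  \max_(k < #|B|.+1 | opt_iter g k b != None) (k : nat).

Definition eps (e : I -> B -> option B) (i : I) (b : B) : nat := str_len (e i) b.
Definition phi (f : I -> B -> option B) (i : I) (b : B) : nat := str_len (f i) b.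

Definition seminormal (e f : I -> B -> option B) : Prop :=
  (forall i b b', e i b = Some b' <-> f i b' = Some b) /\
  (forall i b, exists n, opt_iter (e i) n b = None) /\
  (forall i b, exists n, opt_iter (f i) n b = None).

Definition string_rel (fi : B -> option B) : rel B :=
  fun a b => (fi a == Some b) || (fi b == Some a).

Definition istring (f : I -> B -> option B) (i : I) (b : B) : {set B} :=
  [set b' | connect (string_rel (f i)) b b'].

Definition extremal (e f : I -> B -> option B) (X : {set B}) : Prop :=
  X != set0 /\
  forall i b, let S := istring f i b in
    S :&: X = set0 \/ S \subset X \/
    exists b0, S :&: X = [set b0] /\ e i b0 = None.

Definition e_stable (e : I -> B -> option B) (X : {set B}) : Prop :=
  forall i x x', x \in X -> e i x = Some x' -> x' \in X.

End Crystals.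

Definition tens_e (I : Type) (B1 B2 : finType)
  (e1 f1 : I -> B1 -> option B1) (e2 f2 : I -> B2 -> option B2)
  (i : I) (p : B1 * B2) : option (B1 * B2) :=
  let: (b1, b2) := p in
  if eps e2 i b2 <= phi f1 i b1 then omap (fun x => (x, b2)) (e1 i b1)
  else omap (fun y => (b1, y)) (e2 i b2).

Definition tens_f (I : Type) (B1 B2 : finType)
  (e1 f1 : I -> B1 -> option B1) (e2 f2 : I -> B2 -> option B2)
  (i : I) (p : B1 * B2) : option (B1 * B2) :=
  let: (b1, b2) := p in
  if eps e2 i b2 < phi f1 i b1 then omap (fun x => (x, b2)) (f1 i b1)
  else omap (fun y => (b1, y)) (f2 i b2).

(* Main.v *)
Require Import Defs.
From mathcomp Require Import all_boot.
Set Implicit Arguments. Unset Strict Implicit. Unset Printing Implicit Defensive.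

Section Gen.
Variables (B : finType) (g : B -> option B).
Hypothesis gterm : forall b, exists n, opt_iter g n b = None.

Lemma iter_add m n b : opt_iter g (m + n) b = obind (opt_iter g n) (opt_iter g m b).
Proof.
elim: n => [|n IH]; first by rewrite addn0; case: (opt_iter g m b).
by rewrite addnS /= IH; case: (opt_iter g m b).
Qed.

Lemma iterS n b c : g b = Some c -> opt_iter g n.+1 b = opt_iter g n c.
Proof. by move=> H; rewrite -add1n iter_add /= H. Qed.

Lemma iter_none m n b : m <= n -> opt_iter g m b = None -> opt_iter g n b = None.
Proof. by move=> /subnKC <- H; rewrite iter_add H. Qed.

Lemma no_cycle a a' b z : a < a' -> opt_iter g a b = Some z ->
  opt_iter g a' b = Some z -> False.
Proof.
move=> lt Ha Ha'.
have Hp : opt_iter g (a' - a) z = Some z.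
  have E : a' = a + (a' - a) by rewrite subnKC // ltnW.
  by move: Ha'; rewrite {1}E iter_add Ha.
have Hk : forall k, opt_iter g (k * (a' - a)) z = Some z.
  by elim=> [|k IH] //; rewrite mulSn iter_add Hp.
have [n Hn] := gterm z.
have p0 : 0 < a' - a by rewrite subn_gt0.
have := iter_none (leq_pmulr n p0) Hn.
by rewrite Hk.
Qed.

Lemma iter_card b : opt_iter g #|B| b = None.
Proof.
case E: (opt_iter g #|B| b) => [z|] //; exfalso.
have allS : forall k, k <= #|B| -> opt_iter g k b != None.
  move=> k hk; apply/negP => /eqP Hk.
  by have := iter_none hk Hk; rewrite E.
pose F (k : 'I_#|B|.+1) := odflt b (opt_iter g k b).
have Finj : injective F.
  move=> k1 k2; rewrite /F.
  move: (allS k1 (ltn_ord k1)) (allS k2 (ltn_ord k2)).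
  case E1: (opt_iter g k1 b) => [z1|] // _; case E2: (opt_iter g k2 b) => [z2|] // _ /= Ez.
  subst z2.
  case: (ltngtP k1 k2) => H; last by apply: val_inj.
  - by case: (no_cycle H E1 E2).
  - by case: (no_cycle H E2 E1).
have := leq_card F Finj; by rewrite card_ord ltnn.
Qed.

Lemma len_spec n b : opt_iter g n b != None -> opt_iter g n.+1 b = None ->
  str_len g b = n.
Proof.
move=> Hn Hn1.
have Hlt : n < #|B|.+1.
  rewrite ltnS leqNgt; apply/negP => H.
  by move: Hn; rewrite (iter_none (ltnW H) (iter_card b)).
apply/eqP; rewrite eqn_leq; apply/andP; split.
  apply/bigmax_leqP => k Hk; rewrite leqNgt; apply/negP => H.
  by move: Hk; rewrite (iter_none H Hn1).
have := @leq_bigmax_cond _ (fun k : 'I_#|B|.+1 => opt_iter g k b != None) (fun k : 'I_#|B|.+1 => nat_of_ord k) (Ordinal Hlt) Hn. by [].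
Qed.

Lemma len_exists b : exists n, opt_iter g n b != None /\ opt_iter g n.+1 b = None.
Proof.
have [N HN] := gterm b.
elim: N HN => [|N IH] // HN.
case E: (opt_iter g N b) => [z|]; last by apply: IH.
by exists N; rewrite E.
Qed.

Lemma len0 b : g b = None -> str_len g b = 0.
Proof. by move=> H; apply: len_spec => //=; rewrite H. Qed.

Lemma lenS b c : g b = Some c -> str_len g b = (str_len g c).+1.
Proof.
move=> H; have [n [H1 H2]] := len_exists c.
rewrite (len_spec H1 H2); apply: len_spec; by rewrite (iterS _ H).
Qed.

Lemma len_pos_some b : 0 < str_len g b -> exists c, g b = Some c.
Proof. by case E: (g b) => [c|]; [exists c | rewrite len0]. Qed.

End Gen.

Lemma connect_map (T1 T2 : finType) (r1 : rel T1) (r2 : rel T2) (h : T1 -> T2) :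
  (forall a b, r1 a b -> r2 (h a) (h b)) ->
  forall a b, connect r1 a b -> connect r2 (h a) (h b).
Proof.
move=> H a b /connectP [p pth ->]; elim: p a pth => [|c p IH] a /=.
  by rewrite connect0.
by move/andP=> [r pth]; apply: connect_trans (connect1 (H _ _ r)) (IH _ pth).
Qed.

Theorem proposition8p1 (I : Type) (B1 B2 : finType)
  (e1 f1 : I -> B1 -> option B1) (e2 f2 : I -> B2 -> option B2)
  (hB1 : seminormal e1 f1) (hB2 : seminormal e2 f2)
  (X : {set B1}) (Y : {set B2}) :
  extremal (tens_e e1 f1 e2 f2) (tens_f e1 f1 e2 f2) (setX X Y) ->
  e_stable e1 X /\ (e_stable e2 Y -> extremal e1 f1 X).
Proof.
case: hB1 => [inv1 [et1 ft1]]; case: hB2 => [inv2 [et2 ft2]].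
move=> [ne ext].
have [[x0 y0] Hp0] := set0Pn _ ne.
move: Hp0; rewrite in_setX => /andP [Hx0 Hy0].
set te := tens_e e1 f1 e2 f2; set tf := tens_f e1 f1 e2 f2.
have srS : forall i, symmetric (string_rel (tf i)).
  by move=> i a b; rewrite /string_rel orbC.
have full : forall i p, p \in setX X Y -> te i p != None ->
    istring tf i p \subset setX X Y.
  move=> i p Hp Hte.
  have Hpp : p \in istring tf i p :&: setX X Y by rewrite in_setI Hp andbT inE connect0.
  case: (ext i p) => [H|[H|[b0 [H1 H2]]]] //.
  - by move: Hpp; rewrite H inE.
  - by move: Hpp; rewrite H1 => /set1P E; move: Hte; rewrite E /te H2.
split.
- move=> i x x' Hx Hex.
  set S := istring tf i (x, y0).
  have HS : S \subset setX X Y.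
    apply: full; first by rewrite in_setX Hx Hy0.
    rewrite /te /tens_e /=; case: ifP => H; first by rewrite Hex.
    have : 0 < eps e2 i y0 by move: H; case: (eps e2 i y0).
    by case/(len_pos_some (et2 i)) => c ->.
  have main : forall k y, eps e2 i y <= k -> (x, y) \in S -> x' \in X.
    elim=> [|k IH] y Hk HyS; case: (leqP (eps e2 i y) (phi f1 i x)) => Hle.
    + have : (x', y) \in S.
        rewrite inE; apply: (@connect_trans _ _ (x, y)); first by move: HyS; rewrite inE.
        apply: connect1.
        apply/orP; right; apply/eqP; rewrite /tf /tens_f /=.
        have Hf : f1 i x' = Some x by apply/inv1.
        by rewrite /phi (lenS (ft1 i) Hf) ltnS Hle Hf.
      by move/(subsetP HS); rewrite in_setX => /andP [].
    + by move: Hk; rewrite leqn0 => /eqP E; rewrite E in Hle.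
    + have : (x', y) \in S.
        rewrite inE; apply: (@connect_trans _ _ (x, y)); first by move: HyS; rewrite inE.
        apply: connect1.
        apply/orP; right; apply/eqP; rewrite /tf /tens_f /=.
        have Hf : f1 i x' = Some x by apply/inv1.
        by rewrite /phi (lenS (ft1 i) Hf) ltnS Hle Hf.
      by move/(subsetP HS); rewrite in_setX => /andP [].
    + have : 0 < eps e2 i y by apply: leq_ltn_trans (leq0n _) Hle.
      case/(len_pos_some (et2 i)) => y2 Hy2.
      have Ee : eps e2 i y = (eps e2 i y2).+1 by rewrite /eps (lenS (et2 i) Hy2).
      apply: (IH y2); first by move: Hk; rewrite Ee.
      rewrite inE; apply: (@connect_trans _ _ (x, y)); first by move: HyS; rewrite inE.
        apply: connect1.
      apply/orP; right; apply/eqP; rewrite /tf /tens_f /=.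
      have Hf : f2 i y2 = Some y by apply/inv2.
      by move: Hle; rewrite Ee ltnS => Hle; rewrite ltnNge Hle /= Hf.
  apply: (main _ y0 (leqnn _)).
  by rewrite inE connect0.
- move=> HY; split.
    by apply/set0Pn; exists x0.
  move=> i b /=.
  have [y [Hy Hey]] : exists y, y \in Y /\ e2 i y = None.
    have [n Hn] := et2 i y0.
    elim: n y0 Hy0 Hn => [|n IH] y0 Hy0' Hn //.
    case E: (e2 i y0) => [y2|]; last by exists y0.
    apply: (IH y2); first exact: (HY i y0 y2).
    by rewrite -(iterS _ E).
  have eps0 : eps e2 i y = 0 by rewrite /eps (len0 (et2 i) Hey).
  have edge : forall w w', string_rel (f1 i) w w' -> string_rel (tf i) (w, y) (w', y).
    move=> w w' /orP [/eqP H | /eqP H]; apply/orP; [left|right]; apply/eqP;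
      by rewrite /tf /tens_f /= eps0 /phi (lenS (ft1 i) H) /= H.
  case: (boolP (istring f1 i b :&: X == set0)) => [/eqP H | ]; first by left.
  case/set0Pn => x; rewrite inE => /andP [HbX HxX].
  set St := istring tf i (x, y).
  have clos : forall w, w \in istring f1 i b -> (w, y) \in St.
    move=> w Hw; rewrite inE.
    apply: (connect_map edge).
    move: HbX Hw; rewrite !inE => Hbx Hbw.
    have srS1 : symmetric (string_rel (f1 i)) by move=> a c; rewrite /string_rel orbC.
    rewrite (sym_connect_sym srS1) in Hbx.
    exact: connect_trans Hbx Hbw.
  have Hxy : (x, y) \in St :&: setX X Y by rewrite !inE connect0 /= -in_setX in_setX HxX Hy.
  case: (ext i (x, y)) => [H|[H|[b0 [H1 H2]]]].
  + by move: Hxy; rewrite H inE.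
  + right; left; apply/subsetP => w Hw.
    by have := subsetP H _ (clos w Hw); rewrite in_setX => /andP [].
  + right; right; exists x.
    move: Hxy; rewrite H1 => /set1P E; rewrite -E in H2.
    split; last first.
      by move: H2; rewrite /te /tens_e /= eps0 leq0n; case: (e1 i x).
    apply/setP => w; rewrite in_setI in_set1; apply/andP/eqP => [[Hw HwX] | ->]; last by rewrite HbX HxX.
    have : (w, y) \in St :&: setX X Y by rewrite in_setI clos // in_setX HwX Hy.
    by rewrite H1 -E => /set1P [].
Qed.
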